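(* Let $0<\varepsilon\le 1$, $\gamma>1$, and consider the auxiliary (non-stiff) system $U_t+\nabla\cdot\hat F(U)=0$ in $\mathbb R^d$, where $U=(\rho,\rho\mathbf u,\rho E)$ and $$\hat F(U)=\begin{pmatrix}\rho\mathbf u\\ \rho\mathbf u\otimes\mathbf u+p\,\mathrm{Id}\\ (\rho E+\Pi)\mathbf u\end{pmatrix},\qquad \Pi=\varepsilon^2p+(1-\varepsilon^2)p_\infty,\quad p_\infty(t)=\inf_{\mathbf x}p(\mathbf x,t),$$ with $p=(\gamma-1)\big(\rho E-\tfrac{\varepsilon^2}{2}\rho\|\mathbf u\|^2\big)$. Suppose the data $(\rho,\mathbf u,p)$ at time $t$ are well prepared, i.e. $\nabla\cdot\mathbf u(\mathbf x,t)=0$ and $\nabla p(\mathbf x,t)=0$. Then the solution of the auxiliary system at time $t+\Delta t$ satisfies $$\nabla\cdot\mathbf u(\mathbf x,t+\Delta t)=\mathcal O(\Delta t),\qquad \nabla p(\mathbf x,t+\Delta t)=\mathcal O(\Delta t^2).$$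
   Context: The auxiliary system is the non-stiff part of Klein's splitting $F=\hat F+\tilde F$ of the nondimensionalised compressible Euler flux $F(U)=(\rho\mathbf u,\rho\mathbf u\otimes\mathbf u+\frac{p}{\varepsilon^2}\mathrm{Id},(\rho E+p)\mathbf u)$, where $\varepsilon$ is the reference Mach number, $\rho$ density, $\mathbf u$ velocity, $E$ total specific energy, $p$ pressure. Solutions are assumed smooth so that Taylor expansion in time is valid. *)

(* Defs.v *)
From mathcomp Require Import all_boot all_order all_algebra all_classical all_reals all_analysis.
Import numFieldNormedType.Exports.
Import Order.TTheory GRing.Theory Num.Theory.
Local Open Scope ring_scope.
Local Open Scope classical_set_scope.

CoInductive smooth {R : realType} {V : normedModType R} (f : V -> R) : Prop :=
  Smooth : continuous f ->
           (forall v : V, (forall z, derivable f z v) /\ smooth (fun z => 'D_v f z)) ->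
           smooth f.

Definition smooth_st {R : realType} {d : nat} (f : 'rV[R]_d -> R -> R) : Prop :=
  smooth (fun z : ('rV[R]_d * R)%type => f z.1 z.2).

Definition ej {R : realType} {d : nat} (j : 'I_d) : 'rV[R]_d := delta_mx 0 j.

Definition dx {R : realType} {d : nat} (f : 'rV[R]_d -> R -> R) (j : 'I_d)
  (x : 'rV[R]_d) (s : R) : R := 'D_(ej j) (fun y => f y s) x.

Definition dt {R : realType} {d : nat} (f : 'rV[R]_d -> R -> R)
  (x : 'rV[R]_d) (s : R) : R := 'D_1 (fun r => f x r) s.

Definition divu {R : realType} {d : nat} (u : 'I_d -> 'rV[R]_d -> R -> R)
  (x : 'rV[R]_d) (s : R) : R := \sum_(j < d) dx (u j) j x s.

Definition unorm2 {R : realType} {d : nat} (u : 'I_d -> 'rV[R]_d -> R -> R)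
  (x : 'rV[R]_d) (s : R) : R := \sum_(j < d) (u j x s) ^+ 2.

(* total energy density rho E, from  p = (gamma-1)(rho E - eps^2/2 rho ||u||^2) *)
Definition rhoE {R : realType} {d : nat} (eps gamma : R) (rho : 'rV[R]_d -> R -> R)
  (u : 'I_d -> 'rV[R]_d -> R -> R) (p : 'rV[R]_d -> R -> R)
  (x : 'rV[R]_d) (s : R) : R :=
  p x s / (gamma - 1) + eps ^+ 2 / 2 * rho x s * unorm2 u x s.

Definition pinf {R : realType} {d : nat} (p : 'rV[R]_d -> R -> R) (s : R) : R :=
  inf [set p x s | x in [set: 'rV[R]_d]].

Definition Pi {R : realType} {d : nat} (eps : R) (p : 'rV[R]_d -> R -> R)
  (x : 'rV[R]_d) (s : R) : R :=
  eps ^+ 2 * p x s + (1 - eps ^+ 2) * pinf p s.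

Definition aux_system {R : realType} {d : nat} (eps gamma : R)
  (rho : 'rV[R]_d -> R -> R) (u : 'I_d -> 'rV[R]_d -> R -> R)
  (p : 'rV[R]_d -> R -> R) (t eta : R) : Prop :=
  forall (x : 'rV[R]_d) (s : R), `|s - t| < eta ->
  [/\
      dt rho x s + \sum_(j < d) dx (fun y r => rho y r * u j y r) j x s = 0,
      (forall i : 'I_d,
         dt (fun y r => rho y r * u i y r) x s
         + \sum_(j < d) dx (fun y r => rho y r * u i y r * u j y r) j x s
         + dx p i x s = 0) &
      dt (rhoE eps gamma rho u p) x s
      + \sum_(j < d) dx (fun y r => (rhoE eps gamma rho u p y r + Pi eps p y r) * u j y r) j x s
      = 0].

(* Main.v *)
Require Import Defs.
From mathcomp Require Import all_boot all_order all_algebra all_classical all_reals all_analysis.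
From mathcomp Require Import lra ring.
Import numFieldNormedType.Exports.
Import Order.TTheory GRing.Theory Num.Theory.
Local Open Scope ring_scope.
Local Open Scope classical_set_scope.

Section S.
Variables (R : realType).
Lemma line_eq (V : normedModType R) (F : V -> R) (z v : V) (a : R) :
  (fun h : R => h^-1 *: (((fun h0 : R => F (h0 *: v + z)) \o shift a) (h *: 1)
     - F (a *: v + z)))
  = (fun h => h^-1 *: ((F \o shift (a *: v + z)) (h *: v) - F (a *: v + z))).
Proof.
apply/funext => h /=; congr (_ *: (F _ - _)).
by rewrite [h *: 1]mulr1 scalerDl addrA.
Qed.

Lemma line_derive (V : normedModType R) (F : V -> R) (z v : V) (a : R) :
  'D_1 (fun h : R => F (h *: v + z)) a = 'D_v F (a *: v + z).
Proof. by rewrite /derive line_eq. Qed.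

Lemma line_derivable (V : normedModType R) (F : V -> R) (z v : V) (a : R) :
  derivable (fun h : R => F (h *: v + z)) a 1 <-> derivable F (a *: v + z) v.
Proof. by rewrite /derivable line_eq. Qed.

Lemma lip1 (g : R -> R) t : derivable g t 1 -> g t = 0 ->
  exists C d : R, 0 <= C /\ 0 < d /\ forall h, `|h| < d -> `|g (t + h)| <= C * `|h|.
Proof.
move=> Hd g0.
move: (Hd) => /cvgr_dist_lt/(_ _ ltr01).
move=> /nbhs_ballP[e e0 He].
set L := lim _ in He.
exists (`|L| + 1), e; split; first by rewrite addr_ge0.
split => // h hlt.
have [->|hn0] := eqVneq h 0; first by rewrite addr0 g0 normr0 mulr0.
have := He h; rewrite -ball_normE /ball_ /= sub0r normrN => /(_ hlt hn0).
rewrite [h%:A]mulr1 g0 subr0 (addrC h) => H1.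
have E : g (t + h) = h * (h^-1 *: g (t + h)).
  by rewrite [_ *: _]/(_ * _) mulrA divff // mul1r.
rewrite E normrM mulrC ler_wpM2r //.
have := ler_distD L (h^-1 *: g (t + h)) 0.
rewrite !subr0 distrC => H2; apply: (le_trans H2).
rewrite [X in _ <= X]addrC lerD2r; exact: ltW.
Qed.

Lemma mvt0 (g : R -> R) t h : (forall s, derivable g s 1) ->
  exists c, `|c - t| <= `|h| /\ g (t + h) - g t = 'D_1 g c * h.
Proof.
move=> Hd.
have isd : forall x, x \in `]t - `|h|, t + `|h|[ -> is_derive x 1 g ('D_1 g x).
  by move=> x _; apply: derivableP.
have [hge|hlt] := leP 0 h.
  have [c cin E] := @MVT_segment R g ('D_1 g) t (t + h)
    (ltac:(by rewrite lerDl)) (fun x _ => derivableP (Hd x))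
    (derivable_within_continuous (fun x _ => Hd x)).
  exists c; split; last by rewrite E addrC addKr.
  move: cin; rewrite in_itv /= => /andP[c1 c2].
  rewrite ger0_norm ?subr_ge0 // ger0_norm //; lra.
have [c cin E] := @MVT_segment R g ('D_1 g) (t + h) t
    (ltac:(by rewrite gerDl ltW)) (fun x _ => derivableP (Hd x))
    (derivable_within_continuous (fun x _ => Hd x)).
exists c; split.
  move: cin; rewrite in_itv /= => /andP[c1 c2].
  rewrite ler0_norm ?subr_le0 // ltr0_norm //; lra.
have -> : g (t + h) - g t = - (g t - g (t + h)) by rewrite opprB.
rewrite E; lra.
Qed.

Lemma quad (g : R -> R) t : (forall s, derivable g s 1) -> g t = 0 ->
  'D_1 g t = 0 -> derivable ('D_1 g) t 1 ->
  exists C d : R, 0 <= C /\ 0 < d /\ forall h, `|h| < d -> `|g (t + h)| <= C * h ^+ 2.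
Proof.
move=> Hd g0 dg0 Hd2.
have [C [e [C0 [e0 HC]]]] := @lip1 ('D_1 g) t Hd2 dg0.
exists C, e; split => //; split => // h hlt.
have [c [ct E]] := @mvt0 g t h Hd.
move: E; rewrite g0 subr0 => ->.
have := HC (c - t) (le_lt_trans ct hlt); rewrite addrC subrK => H.
rewrite normrM; apply: (le_trans (ler_wpM2r (normr_ge0 h) H)).
rewrite -real_normK ?num_real // -mulrA ler_wpM2l // ler_wpM2r //.
Qed.
End S.


Section S.
Variables (R : realType) (V : normedModType R).
Implicit Types F : V -> R.

Lemma sm_cont F : smooth F -> continuous F.
Proof. by case. Qed.
Lemma sm_der F : smooth F -> forall z v, derivable F z v.
Proof. by case=> _ H z v; case: (H v). Qed.
Lemma sm_D F v : smooth F -> smooth ('D_v F).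
Proof. by case=> _ H; case: (H v). Qed.

Definition Delta F v w z h :=
  F (h *: v + (h *: w + z)) - F (h *: v + z) - F (h *: w + z) + F z.

Lemma DeltaC F v w z h : Delta F v w z h = Delta F w v z h.
Proof.
rewrite /Delta addrA [h *: v + h *: w]addrC -addrA.
by rewrite -[_ - F (h *: v + z) - _]addrA [- F (h *: v + z) - _]addrC addrA.
Qed.

Lemma Delta_mvt F v w z h : smooth F ->
  exists xi eta, `|xi| <= `|h| /\ `|eta| <= `|h| /\
   Delta F v w z h = 'D_w ('D_v F) (eta *: w + (xi *: v + z)) * h * h.
Proof.
move=> sF.
pose psi := (fun a : R => F (a *: v + (h *: w + z))) - (fun a : R => F (a *: v + z)).
have dpsi : forall s, derivable psi s 1.
  move=> s; apply: derivableB.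
    by apply/(@line_derivable R V F (h *: w + z) v s); apply: sm_der.
  by apply/(@line_derivable R V F z v s); apply: sm_der.
have [xi [xih E]] := @mvt0 R psi 0 h dpsi.
have Dpsi : 'D_1 psi xi = 'D_v F (h *: w + (xi *: v + z)) - 'D_v F (xi *: v + z).
  rewrite deriveB; try by apply/line_derivable; apply: sm_der.
  by rewrite !line_derive addrCA.
pose chi := fun b : R => 'D_v F (b *: w + (xi *: v + z)).
have dchi : forall s, derivable chi s 1.
  move=> s; rewrite /chi.
  apply/(@line_derivable R V ('D_v F) (xi *: v + z) w s).
  exact: (@sm_der _ (@sm_D F v sF)).
have [eta [etah E2]] := @mvt0 R chi 0 h dchi.
exists xi, eta; split; first by rewrite subr0 in xih.
split; first by rewrite subr0 in etah.
have -> : Delta F v w z h = psi (0 + h) - psi 0.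
  rewrite /Delta add0r.
  change (F (h *: v + (h *: w + z)) - F (h *: v + z) - F (h *: w + z) + F z =
    (F (h *: v + (h *: w + z)) - F (h *: v + z)) - (F (0 *: v + (h *: w + z)) - F (0 *: v + z))).
  rewrite !scale0r !add0r; lra.
rewrite E Dpsi.
have -> : 'D_v F (h *: w + (xi *: v + z)) - 'D_v F (xi *: v + z) = chi (0 + h) - chi 0.
  by rewrite /chi add0r scale0r add0r.
by rewrite E2 /chi (@line_derive R V ('D_v F)).
Qed.

Lemma tri_contra (R' : realType) (a b c : R') : `|a - c| + `|b - c| < `|a - b| -> False.
Proof.
have := ler_distD c a b; rewrite (distrC c b) => H1 H2.
by have := le_lt_trans H1 H2; rewrite ltxx.
Qed.

Lemma schwarz F v w z : smooth F -> 'D_w ('D_v F) z = 'D_v ('D_w F) z.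
Proof.
move=> sF.
have cA := @sm_cont _ (@sm_D _ w (@sm_D F v sF)).
have cB := @sm_cont _ (@sm_D _ v (@sm_D F w sF)).
set A := 'D_w ('D_v F) in cA *; set B := 'D_v ('D_w F) in cB *.
have HD : forall h : R, h != 0 -> exists (xi eta xi' eta' : R),
   [/\ `|xi| <= `|h|, `|eta| <= `|h|, `|xi'| <= `|h|, `|eta'| <= `|h| &
   B (eta' *: v + (xi' *: w + z)) = A (eta *: w + (xi *: v + z))].
  move=> h hn0.
  have [xi [eta [xh [eh E1]]]] := @Delta_mvt F v w z h sF.
  have [xi' [eta' [xh' [eh' E2]]]] := @Delta_mvt F w v z h sF.
  rewrite DeltaC E2 in E1.
  move: E1 => /(mulIf hn0)/(mulIf hn0) E.
  exists xi, eta, xi', eta'; split; [exact: xh | exact: eh | exact: xh' | exact: eh' | exact: E].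
have [//|neq] := eqVneq (A z) (B z); exfalso.
set e := `|A z - B z| / 2.
have e0 : 0 < e by rewrite divr_gt0 // normr_gt0 subr_eq0.
move: (cA z) => /cvgr_dist_lt/(_ _ e0)/nbhs_ballP[r1 r10 H1].
move: (cB z) => /cvgr_dist_lt/(_ _ e0)/nbhs_ballP[r2 r20 H2].
set r := Num.min r1 r2.
have r0 : 0 < r by rewrite lt_min r10 r20.
set M := `|v| + `|w| + 1.
have M0 : 0 < M by rewrite ltr_wpDl // addr_ge0.
set h := r / M.
have h0 : 0 < h by rewrite divr_gt0.
have hM : h * M = r by rewrite /h divfK // gt_eqF.
clearbody h.
have key : forall (a b : R) (x y : V), `|a| <= `|h| -> `|b| <= `|h| ->
    `|z - (a *: x + (b *: y + z))| <= h * (`|x| + `|y|).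
  move=> a b x y ah bh.
  rewrite addrA opprD addrCA subrr addr0 normrN.
  apply: le_trans (ler_normD _ _) _; rewrite !normrZ mulrDr.
  by apply: lerD; rewrite -[h]gtr0_norm // ler_wpM2r.
have hvw : h * (`|w| + `|v|) < r.
  rewrite -hM ltr_pM2l // /M addrC ltrDl; exact: ltr01.
have hwv : h * (`|v| + `|w|) < r by rewrite addrC.
have [xi [eta [xi' [eta' [xh eh xh' eh' E]]]]] := HD h (lt0r_neq0 h0).
have p1 : ball z r1 (eta *: w + (xi *: v + z)).
  rewrite -ball_normE /ball_ /=.
  apply: le_lt_trans (key _ _ _ _ eh xh) (lt_le_trans hvw _).
  by rewrite ge_min lexx.
have p2 : ball z r2 (eta' *: v + (xi' *: w + z)).
  rewrite -ball_normE /ball_ /=.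
  apply: le_lt_trans (key _ _ _ _ eh' xh') (lt_le_trans hwv _).
  by rewrite ge_min lexx orbT.
have q1 := H1 _ p1; have q2 := H2 _ p2.
rewrite -E in q1.
apply: (@tri_contra R (A z) (B z) (B (eta' *: v + (xi' *: w + z)))).
apply: (lt_le_trans (ltrD q1 q2)).
by rewrite /e -splitr.
Qed.
End S.


Section C.
Context {R : realType} {d : nat}.
Implicit Types f g : 'rV[R]_d -> R -> R.
Definition dX f := forall (y : 'rV[R]_d) s (v : 'rV[R]_d), derivable (fun y' => f y' s) y v.
Definition dT f := forall (y : 'rV[R]_d) (s : R), derivable (fun r => f y r) s 1.

Lemma dX_M f g : dX f -> dX g -> dX (fun y r => f y r * g y r).
Proof. by move=> Hf Hg y s v; exact: (derivableM (Hf y s v) (Hg y s v)). Qed.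
Lemma dT_M f g : dT f -> dT g -> dT (fun y r => f y r * g y r).
Proof. by move=> Hf Hg y s; exact: (derivableM (Hf y s) (Hg y s)). Qed.
Lemma dX_D f g : dX f -> dX g -> dX (fun y r => f y r + g y r).
Proof. by move=> Hf Hg y s v; exact: (derivableD (Hf y s v) (Hg y s v)). Qed.
Lemma dT_D f g : dT f -> dT g -> dT (fun y r => f y r + g y r).
Proof. by move=> Hf Hg y s; exact: (derivableD (Hf y s) (Hg y s)). Qed.
Lemma dX_c (c : R -> R) : dX (fun y r => c r).
Proof. by move=> y s v; exact: (derivable_cst (c s)). Qed.
Lemma dT_c (c : R) : dT (fun y r => c).
Proof. by move=> y s; exact: (derivable_cst c). Qed.
Lemma dX_sum n (F : 'I_n -> 'rV[R]_d -> R -> R) : (forall k, dX (F k)) ->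
  dX (fun y r => \sum_(k < n) F k y r).
Proof.
move=> H y s v.
have -> : (fun y' => \sum_(k < n) F k y' s) = \sum_(k < n) (fun y' => F k y' s).
  by apply/funext => y'; rewrite fct_sumE.
by apply: derivable_sum => k; exact: H.
Qed.

Lemma dX_sum' n (F : 'I_n -> 'rV[R]_d -> R -> R) : (forall k, dX (F k)) ->
  dX (fun y r => \sum_(k < n) F k y r).
Proof. exact: dX_sum. Qed.

Lemma dT_sum n (F : 'I_n -> 'rV[R]_d -> R -> R) : (forall k, dT (F k)) ->
  dT (fun y r => \sum_(k < n) F k y r).
Proof.
move=> H y s.
have -> : (fun r => \sum_(k < n) F k y r) = \sum_(k < n) (fun r => F k y r).
  by apply/funext => r; rewrite fct_sumE.
by apply: derivable_sum => k; exact: H.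
Qed.

Lemma dx_M f g j y s : dX f -> dX g ->
  dx (fun y r => f y r * g y r) j y s = dx f j y s * g y s + f y s * dx g j y s.
Proof.
move=> Hf Hg; rewrite /dx.
change ('D_(ej j) ((fun y' => f y' s) * (fun y' => g y' s)) y =
  'D_(ej j) (fun y' => f y' s) y * g y s + f y s * 'D_(ej j) (fun y' => g y' s) y).
rewrite deriveM; [|exact: Hf|exact: Hg].
by rewrite /= addrC mulrC.
Qed.

Lemma dt_M f g y s : dT f -> dT g ->
  dt (fun y r => f y r * g y r) y s = dt f y s * g y s + f y s * dt g y s.
Proof.
move=> Hf Hg; rewrite /dt.
change ('D_1 ((fun r => f y r) * (fun r => g y r)) s =
  'D_1 (fun r => f y r) s * g y s + f y s * 'D_1 (fun r => g y r) s).
rewrite deriveM; [|exact: Hf|exact: Hg].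
by rewrite /= addrC mulrC.
Qed.

Lemma dx_D f g j y s : dX f -> dX g ->
  dx (fun y r => f y r + g y r) j y s = dx f j y s + dx g j y s.
Proof.
move=> Hf Hg; rewrite /dx.
change ('D_(ej j) ((fun y' => f y' s) + (fun y' => g y' s)) y =
  'D_(ej j) (fun y' => f y' s) y + 'D_(ej j) (fun y' => g y' s) y).
by rewrite deriveD; [|exact: Hf|exact: Hg].
Qed.

Lemma dt_D f g y s : dT f -> dT g ->
  dt (fun y r => f y r + g y r) y s = dt f y s + dt g y s.
Proof.
move=> Hf Hg; rewrite /dt.
change ('D_1 ((fun r => f y r) + (fun r => g y r)) s =
  'D_1 (fun r => f y r) s + 'D_1 (fun r => g y r) s).
by rewrite deriveD; [|exact: Hf|exact: Hg].
Qed.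

Lemma dx_c (c : R -> R) j y s : dx (fun (y' : 'rV[R]_d) (r : R) => c r) j y s = 0.
Proof. by rewrite /dx; exact: (derive_cst (c s)). Qed.
Lemma dt_c (c : R) y s : dt (fun (y' : 'rV[R]_d) (r : R) => c) y s = 0.
Proof. by rewrite /dt; exact: (derive_cst c). Qed.

Lemma dx_sum n (F : 'I_n -> 'rV[R]_d -> R -> R) j y s : (forall k, dX (F k)) ->
  dx (fun y r => \sum_(k < n) F k y r) j y s = \sum_(k < n) dx (F k) j y s.
Proof.
move=> H; rewrite /dx.
have -> : (fun y' => \sum_(k < n) F k y' s) = \sum_(k < n) (fun y' => F k y' s).
  by apply/funext => y'; rewrite fct_sumE.
by rewrite derive_sum // => k; exact: H.
Qed.

Lemma dt_sum n (F : 'I_n -> 'rV[R]_d -> R -> R) y s : (forall k, dT (F k)) ->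
  dt (fun y r => \sum_(k < n) F k y r) y s = \sum_(k < n) dt (F k) y s.
Proof.
move=> H; rewrite /dt.
have -> : (fun r => \sum_(k < n) F k y r) = \sum_(k < n) (fun r => F k y r).
  by apply/funext => r; rewrite fct_sumE.
by rewrite derive_sum // => k; exact: H.
Qed.

Lemma dX_Mr f (c : R) : dX f -> dX (fun y r => f y r * c).
Proof. by move=> H; apply: dX_M H (dX_c _). Qed.
Lemma dX_Ml (c : R) f : dX f -> dX (fun y r => c * f y r).
Proof. by move=> H; apply: dX_M (dX_c _) H. Qed.
Lemma dT_Mr f (c : R) : dT f -> dT (fun y r => f y r * c).
Proof. by move=> H; apply: dT_M H (dT_c _). Qed.
Lemma dT_Ml (c : R) f : dT f -> dT (fun y r => c * f y r).
Proof. by move=> H; apply: dT_M (dT_c _) H. Qed.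
Lemma dx_Mr f (c : R) j y s : dX f -> dx (fun y r => f y r * c) j y s = dx f j y s * c.
Proof.
move=> H; rewrite (dx_M f (fun _ _ => c) j y s H (dX_c _)).
by rewrite (dx_c (fun _ => c)) mulr0 addr0.
Qed.
Lemma dx_Ml (c : R) f j y s : dX f -> dx (fun y r => c * f y r) j y s = c * dx f j y s.
Proof.
move=> H; rewrite (dx_M (fun _ _ => c) f j y s (dX_c _) H).
by rewrite (dx_c (fun _ => c)) mul0r add0r.
Qed.
Lemma dt_Mr f (c : R) y s : dT f -> dt (fun y r => f y r * c) y s = dt f y s * c.
Proof.
move=> H; rewrite (dt_M f (fun _ _ => c) y s H (dT_c _)).
by rewrite (dt_c c) mulr0 addr0.
Qed.
Lemma dt_Ml (c : R) f y s : dT f -> dt (fun y r => c * f y r) y s = c * dt f y s.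
Proof.
move=> H; rewrite (dt_M (fun _ _ => c) f y s (dT_c _) H).
by rewrite (dt_c c) mul0r add0r.
Qed.
End C.


Section A.
Context {R : realType} {d : nat}.
Lemma alg (r0 rt pt c1 c2 EP N : R) (rx U Ut : 'I_d -> R) (Ux : 'I_d -> 'I_d -> R) :
  c1 != 0 ->
  \sum_(j < d) Ux j j = 0 ->
  rt + \sum_(j < d) (rx j * U j + r0 * Ux j j) = 0 ->
  (forall i, rt * U i + r0 * Ut i + \sum_(j < d) ((rx j * U i + r0 * Ux i j) * U j + r0 * U i * Ux j j) = 0) ->
  pt * c1 + c2 * (rt * N + r0 * \sum_(k < d) (Ut k * U k + U k * Ut k))
   + \sum_(j < d) ((c2 * (rx j * N + r0 * \sum_(k < d) (Ux k j * U k + U k * Ux k j))) * U j + EP * Ux j j) = 0 ->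
  pt = 0.
Proof.
move=> c10 hdiv hm hmo he.
have M0 : \sum_(j < d) rx j * U j = - rt.
  by move: hm; rewrite big_split /= -mulr_sumr hdiv mulr0 addr0 => /eqP; rewrite addr_eq0 => /eqP ->; rewrite opprK.
have A0 : forall i, r0 * Ut i + r0 * \sum_(j < d) Ux i j * U j = 0.
  move=> i; move: (hmo i).
  rewrite (eq_bigr (fun j => U i * (rx j * U j) + r0 * (Ux i j * U j) + (r0 * U i) * Ux j j)); last by move=> j _; ring.
  rewrite !big_split /= -!mulr_sumr hdiv M0 mulr0 addr0 => H.
  by rewrite -[RHS]H; ring.
have T3 : \sum_(k < d) (Ut k * U k + U k * Ut k) = 2 * \sum_(k < d) U k * Ut k.
  by rewrite mulr_sumr; apply: eq_bigr => k _; ring.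
have T4 : \sum_(j < d) (\sum_(k < d) Ux k j * U k) * U j = \sum_(k < d) U k * \sum_(j < d) Ux k j * U j.
  under eq_bigr => j _ do rewrite mulr_suml.
  rewrite exchange_big /=; apply: eq_bigr => k _; rewrite mulr_sumr.
  by apply: eq_bigr => j _; ring.
have B0 : r0 * \sum_(k < d) U k * Ut k + r0 * \sum_(k < d) U k * \sum_(j < d) Ux k j * U j = 0.
  rewrite !mulr_sumr -big_split /= big1 // => k _.
  by rewrite -[RHS](mulr0 (U k)) -[in RHS](A0 k); ring.
move: he.
rewrite [X in _ + X = _](eq_bigr (fun j => c2 * N * (rx j * U j) + (2 * c2 * r0) * ((\sum_(k < d) Ux k j * U k) * U j) + EP * Ux j j)); last first.
  move=> j _.
  have -> : \sum_(k < d) (Ux k j * U k + U k * Ux k j) = 2 * \sum_(k < d) Ux k j * U k.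
    by rewrite mulr_sumr; apply: eq_bigr => k _; ring.
  ring.
rewrite T3 !big_split /= -!mulr_sumr T4 M0 hdiv => he.
have : pt * c1 = 0.
  rewrite -[RHS]he; move: B0; set X := \sum_(k < d) U k * Ut k; set Y := \sum_(k < d) U k * _ => B0.
  transitivity (pt * c1 + 2 * c2 * (r0 * X + r0 * Y)).
    by rewrite B0 mulr0 addr0.
  ring.
by move/eqP; rewrite mulf_eq0 (negbTE c10) orbF => /eqP.
Qed.
End A.

Section E.
Context {R : realType} {d : nat}.
Variables (eps gamma : R) (rho : 'rV[R]_d -> R -> R) (u : 'I_d -> 'rV[R]_d -> R -> R) (p : 'rV[R]_d -> R -> R).
Hypotheses (rX : dX rho) (rT : dT rho) (uX : forall i, dX (u i)) (uT : forall i, dT (u i)) (pX : dX p) (pT : dT p).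
Lemma unorm2E : unorm2 u = fun y r => \sum_(k < d) u k y r * u k y r.
Proof. by apply/funext => y; apply/funext => r; rewrite /unorm2; apply: eq_bigr => k _; rewrite expr2. Qed.
Lemma dXN : dX (unorm2 u).
Proof. rewrite unorm2E; apply: dX_sum => k. exact: (dX_M _ _ (uX k) (uX k)). Qed.
Lemma dTN : dT (unorm2 u).
Proof. rewrite unorm2E; apply: dT_sum => k; exact: (dT_M _ _ (uT k) (uT k)). Qed.
Lemma dtN y s : dt (unorm2 u) y s = \sum_(k < d) (dt (u k) y s * u k y s + u k y s * dt (u k) y s).
Proof.
rewrite unorm2E dt_sum; last by move=> k; exact: (dT_M _ _ (uT k) (uT k)).
by apply: eq_bigr => k _; rewrite (dt_M _ _ _ _ (uT k) (uT k)).
Qed.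
Lemma dxN j y s : dx (unorm2 u) j y s = \sum_(k < d) (dx (u k) j y s * u k y s + u k y s * dx (u k) j y s).
Proof.
rewrite unorm2E dx_sum; last by move=> k; exact: (dX_M _ _ (uX k) (uX k)).
by apply: eq_bigr => k _; rewrite (dx_M _ _ _ _ _ (uX k) (uX k)).
Qed.
Let c1 := (gamma - 1)^-1.
Let c2 := eps ^+ 2 / 2.
Lemma dXE : dX (rhoE eps gamma rho u p).
Proof.
apply: (@dX_D _ _ (fun y r => p y r * c1) (fun y r => c2 * rho y r * unorm2 u y r)).
  exact: dX_Mr pX.
exact: dX_M _ _ (dX_Ml _ _ rX) dXN.
Qed.
Lemma dTE : dT (rhoE eps gamma rho u p).
Proof.
apply: (@dT_D _ _ (fun y r => p y r * c1) (fun y r => c2 * rho y r * unorm2 u y r)).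
  exact: dT_Mr pT.
exact: dT_M _ _ (dT_Ml _ _ rT) dTN.
Qed.
Lemma dtE y s : dt (rhoE eps gamma rho u p) y s =
  dt p y s * c1 + c2 * (dt rho y s * unorm2 u y s + rho y s * dt (unorm2 u) y s).
Proof.
rewrite (@dt_D _ _ (fun y r => p y r * c1) (fun y r => c2 * rho y r * unorm2 u y r) y s
  (dT_Mr _ _ pT) (dT_M _ _ (dT_Ml _ _ rT) dTN)).
rewrite (dt_Mr p c1 y s pT).
rewrite (dt_M (fun y r => c2 * rho y r) (unorm2 u) y s (dT_Ml _ _ rT) dTN).
rewrite (dt_Ml c2 rho y s rT).
ring.
Qed.
Lemma dxE j y s : dx (rhoE eps gamma rho u p) j y s =
  dx p j y s * c1 + c2 * (dx rho j y s * unorm2 u y s + rho y s * dx (unorm2 u) j y s).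
Proof.
rewrite (@dx_D _ _ (fun y r => p y r * c1) (fun y r => c2 * rho y r * unorm2 u y r) j y s
  (dX_Mr _ _ pX) (dX_M _ _ (dX_Ml _ _ rX) dXN)).
rewrite (dx_Mr p c1 j y s pX).
rewrite (dx_M (fun y r => c2 * rho y r) (unorm2 u) j y s (dX_Ml _ _ rX) dXN).
rewrite (dx_Ml c2 rho j y s rX).
ring.
Qed.

Lemma dXPi : dX (Pi eps p).
Proof. exact: (@dX_D _ _ (fun y r => eps ^+ 2 * p y r) (fun y r => (1 - eps ^+ 2) * pinf p r) (dX_Ml _ _ pX) (dX_c _)). Qed.
Lemma dxPi j y s : dx (Pi eps p) j y s = eps ^+ 2 * dx p j y s.
Proof.
rewrite (@dx_D _ _ (fun y r => eps ^+ 2 * p y r) (fun y r => (1 - eps ^+ 2) * pinf p r) j y s (dX_Ml _ _ pX) (dX_c _)).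
by rewrite (dx_Ml _ _ _ _ _ pX) (dx_c (fun r => (1 - eps ^+ 2) * pinf p r)) addr0.
Qed.

Lemma pt0 t eta y : 1 < gamma -> aux_system eps gamma rho u p t eta -> 0 < eta ->
  (forall x, divu u x t = 0) -> (forall x j, dx p j x t = 0) -> dt p y t = 0.
Proof.
move=> g1 Haux e0 Hdiv Hpx.
have [Hm Hmo He] := Haux y t (ltac:(by rewrite subrr normr0)).
apply: (@alg R d (rho y t) (dt rho y t) (dt p y t) c1 c2
  (rhoE eps gamma rho u p y t + Pi eps p y t) (unorm2 u y t)
  (fun j => dx rho j y t) (fun j => u j y t) (fun j => dt (u j) y t)
  (fun k j => dx (u k) j y t)).
- by rewrite /c1 invr_neq0 // subr_eq0 gt_eqF.
- exact: Hdiv.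
- move: Hm; rewrite (eq_bigr (fun j => dx rho j y t * u j y t + rho y t * dx (u j) j y t)) //.
  by move=> j _; rewrite (dx_M _ _ _ _ _ rX (uX j)).
- move=> i; move: (Hmo i); rewrite Hpx addr0 (dt_M _ _ _ _ rT (uT i)).
  rewrite (eq_bigr (fun j => (dx rho j y t * u i y t + rho y t * dx (u i) j y t) * u j y t
      + rho y t * u i y t * dx (u j) j y t)) //.
  move=> j _.
  rewrite (dx_M (fun y r => rho y r * u i y r) (u j) j y t (dX_M _ _ rX (uX i)) (uX j)).
  by rewrite (dx_M _ _ _ _ _ rX (uX i)).
- move: He; rewrite dtE dtN.
  rewrite [X in _ + X = _](eq_bigr (fun j => (c2 * (dx rho j y t * unorm2 u y t + rho y t *
      \sum_(k < d) (dx (u k) j y t * u k y t + u k y t * dx (u k) j y t))) * u j y t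
      + (rhoE eps gamma rho u p y t + Pi eps p y t) * dx (u j) j y t)) //.
  move=> j _.
  rewrite (dx_M (fun y r => rhoE eps gamma rho u p y r + Pi eps p y r) (u j) j y t
     (dX_D _ _ dXE dXPi) (uX j)).
  rewrite (dx_D _ _ _ _ _ dXE dXPi) dxE dxN dxPi Hpx; ring.
Qed.
End E.


Section M.
Context {R : realType} {d : nat}.
Implicit Types (K : ('rV[R]_d * R)%type -> R).

Lemma sX_eq K x s (v : 'rV[R]_d) :
  (fun h : R => h^-1 *: (((fun y => K (y, s)) \o shift x) (h *: v) - K (x, s)))
  = (fun h => h^-1 *: ((K \o shift (x, s)) (h *: ((v, 0) : 'rV[R]_d * R)) - K (x, s))).
Proof.
apply/funext => h /=; congr (_ *: (K _ - _)).
by apply/eqP; rewrite xpair_eqE /= scaler0 add0r !eqxx.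
Qed.
Lemma sX_derive K x s v :
  'D_v (fun y => K (y, s)) x = 'D_((v, 0) : 'rV[R]_d * R) K (x, s).
Proof. by rewrite /derive sX_eq. Qed.
Lemma sX_derivable K x s v :
  derivable (fun y => K (y, s)) x v <-> derivable K (x, s) ((v, 0) : 'rV[R]_d * R).
Proof. by rewrite /derivable sX_eq. Qed.
Lemma sT_eq K x s :
  (fun h : R => h^-1 *: (((fun r => K (x, r)) \o shift s) (h *: 1) - K (x, s)))
  = (fun h => h^-1 *: ((K \o shift (x, s)) (h *: ((0, 1) : 'rV[R]_d * R)) - K (x, s))).
Proof.
apply/funext => h /=; congr (_ *: (K _ - _)).
by apply/eqP; rewrite xpair_eqE /= scaler0 add0r !eqxx.
Qed.
Lemma sT_derive K x s :
  'D_1 (fun r => K (x, r)) s = 'D_((0, 1) : 'rV[R]_d * R) K (x, s).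
Proof. by rewrite /derive sT_eq. Qed.
Lemma sT_derivable K x s :
  derivable (fun r => K (x, r)) s 1 <-> derivable K (x, s) ((0, 1) : 'rV[R]_d * R).
Proof. by rewrite /derivable sT_eq. Qed.

Lemma sm_dX (f : 'rV[R]_d -> R -> R) : smooth_st f -> dX f.
Proof.
move=> H y s v.
exact: ((sX_derivable (fun z => f z.1 z.2) y s v).2 (@sm_der R _ (fun z => f z.1 z.2) H _ _)).
Qed.
Lemma sm_dT (f : 'rV[R]_d -> R -> R) : smooth_st f -> dT f.
Proof.
move=> H y s.
exact: ((sT_derivable (fun z => f z.1 z.2) y s).2 (@sm_der R _ (fun z => f z.1 z.2) H _ _)).
Qed.

Lemma near_of_ball (P : R -> Prop) e : 0 < e -> (forall h, `|h| < e -> P h) ->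
  \forall h \near (0 : R), P h.
Proof.
move=> e0 H; apply/nbhs_ballP; exists e => // h.
by rewrite -ball_normE /ball_ /= sub0r normrN; exact: H.
Qed.
Lemma ball_of_near (P : R -> Prop) : (\forall h \near (0 : R), P h) ->
  exists e, 0 < e /\ forall h, `|h| < e -> P h.
Proof.
move=> /nbhs_ballP[e e0 H]; exists e; split => // h he; apply: H.
by rewrite -ball_normE /ball_ /= sub0r normrN.
Qed.
End M.

Theorem proposition2p1 (R : realType) (d : nat) (eps gamma : R)
  (rho : 'rV[R]_d -> R -> R) (u : 'I_d -> 'rV[R]_d -> R -> R)
  (p : 'rV[R]_d -> R -> R) (t eta : R) :
  0 < eps <= 1 -> 1 < gamma -> 0 < eta ->
  smooth_st rho -> (forall i, smooth_st (u i)) -> smooth_st p ->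
  (* p_infty(s) = inf_x p(x,s) is finite *)
  (forall s, `|s - t| < eta -> has_lbound [set p x s | x in [set: 'rV[R]_d]]) ->
  aux_system eps gamma rho u p t eta ->
  (* well-prepared data at time t *)
  (forall x, divu u x t = 0) ->
  (forall x (j : 'I_d), dx p j x t = 0) ->
  forall x : 'rV[R]_d,
  exists C delta : R, 0 < delta /\
    forall h : R, `|h| < delta ->
      `|divu u x (t + h)| <= C * `|h| /\
      (forall j : 'I_d, `|dx p j x (t + h)| <= C * h ^+ 2).
Proof.
move=> _ g1 e0 srho su sp _ Haux Hdiv Hpx x.
have rX := sm_dX _ srho; have rT := sm_dT _ srho.
have uX : forall i, dX (u i) by move=> i; exact: sm_dX _ (su i).
have uT : forall i, dT (u i) by move=> i; exact: sm_dT _ (su i).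
have pX := sm_dX _ sp; have pT := sm_dT _ sp.
have pt0' : forall y, dt p y t = 0.
  by move=> y; exact: (@pt0 R d eps gamma rho u p rX rT uX uT pX pT t eta y g1 Haux e0 Hdiv Hpx).
pose K (j : 'I_d) := 'D_((ej j, 0) : 'rV[R]_d * R) (fun z : 'rV[R]_d * R => u j z.1 z.2).
have sK : forall j, smooth (K j) by move=> j; exact: (@sm_D R _ _ _ (su j)).
have divE : forall s, divu u x s = \sum_(j < d) K j (x, s).
  move=> s; apply: eq_bigr => j _.
  exact: (sX_derive (fun z : 'rV[R]_d * R => u j z.1 z.2) x s (ej j)).
have dG : derivable (fun s => divu u x s) t 1.
  have -> : (fun s => divu u x s) = \sum_(j < d) (fun s => K j (x, s)).
    by apply/funext => s; rewrite divE fct_sumE.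
  apply: derivable_sum => j; apply/(sT_derivable (K j) x t).
  exact: (@sm_der R _ _ (sK j)).
have [C1 [d1 [C10 [d10 H1]]]] := @lip1 R (fun s => divu u x s) t dG (Hdiv x).
have Q : forall j : 'I_d, exists C : R, 0 <= C /\
    \forall h \near (0 : R), `|dx p j x (t + h)| <= C * h ^+ 2.
  move=> j.
  pose P := fun z : 'rV[R]_d * R => p z.1 z.2.
  pose Kp := 'D_((ej j, 0) : 'rV[R]_d * R) P.
  have sKp : smooth Kp by exact: (@sm_D R _ _ _ sp).
  have gE : (fun s => dx p j x s) = (fun s => Kp (x, s)).
    by apply/funext => s; exact: (sX_derive P x s (ej j)).
  have dg : forall s, derivable (fun s => dx p j x s) s 1.
    move=> s; rewrite gE; apply/(sT_derivable Kp x s).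
    exact: (@sm_der R _ _ sKp).
  have D1E : 'D_1 (fun s => dx p j x s) = (fun s => 'D_((0, 1) : 'rV[R]_d * R) Kp (x, s)).
    by rewrite gE; apply/funext => s; exact: (sT_derive Kp x s).
  have dg2 : derivable ('D_1 (fun s => dx p j x s)) t 1.
    rewrite D1E; apply/(sT_derivable ('D_((0, 1) : 'rV[R]_d * R) Kp) x t).
    exact: (@sm_der R _ _ (@sm_D R _ _ _ sKp)).
  have dg0 : 'D_1 (fun s => dx p j x s) t = 0.
    transitivity ('D_((0, 1) : 'rV[R]_d * R) Kp (x, t)).
      exact: (congr1 (fun F => F t) D1E).
    rewrite /Kp (@schwarz R _ P _ _ _ sp).
    rewrite -(sX_derive ('D_((0, 1) : 'rV[R]_d * R) P) x t (ej j)).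
    have -> : (fun y => 'D_((0, 1) : 'rV[R]_d * R) P (y, t)) = cst 0.
      apply/funext => y; transitivity (dt p y t); last exact: pt0'.
      by symmetry; exact: (sT_derive P y t).
    exact: derive_cst.
  have [C [e [C0 [e0' HC]]]] := @quad R (fun s => dx p j x s) t dg (Hpx x j) dg0 dg2.
  by exists C; split => //; exact: (near_of_ball _ _ e0' HC).
have /fin_all_exists [Cf HCf] := Q.
set C2 := \sum_(j < d) Cf j.
have C20 : 0 <= C2 by apply: sumr_ge0 => j _; case: (HCf j).
have HC2 : forall j, Cf j <= C2.
  move=> j; rewrite /C2 (bigD1 j) //= lerDl; apply: sumr_ge0 => i _; by case: (HCf i).
have N2 : \forall h \near (0 : R), forall j, `|dx p j x (t + h)| <= C2 * h ^+ 2.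
  apply: (@filter_forall R _ (fun j h => `|dx p j x (t + h)| <= C2 * h ^+ 2) (nbhs (0 : R)) _) => jj; case: (HCf jj) => _ Hn; apply: filterS Hn => h Hh.
  by apply: (le_trans Hh); apply: ler_wpM2r; [exact: sqr_ge0 | exact: HC2].
have N1 := near_of_ball _ _ d10 H1.
have [e [e0' He]] := ball_of_near _ (filterI N1 N2).
exists (C1 + C2), e; split => // h hlt; have [A B] := He h hlt; split.
  by apply: (le_trans A); apply: ler_wpM2r => //; rewrite lerDl.
by move=> j; apply: (le_trans (B j)); apply: ler_wpM2r; [exact: sqr_ge0 | rewrite lerDr].
Qed.
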